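(* Let $\mathfrak{l}$ be a finite-dimensional restricted Lie algebra over an algebraically closed field $\mathbb{K}$ of characteristic $p$ which is perfect, i.e. $[\mathfrak{l},\mathfrak{l}]=\mathfrak{l}$, and let $\chi\in\mathfrak{l}^\ast$. Let $\mathfrak{l}_\chi=\mathfrak{l}\oplus\mathbb{K}c$ be the restricted Lie algebra with bracket $[a+\alpha c,b+\beta c]=[a,b]$ and $p$-map $(a+\alpha c)^{[p]}=a^{[p]}+(\chi(a)^p+\alpha^p)c$. Then the central extension of restricted Lie algebras $0\to\mathbb{K}c\to\mathfrak{l}_\chi\to\mathfrak{l}\to0$ is split (i.e. there is a restricted Lie algebra homomorphism $s:\mathfrak{l}\to\mathfrak{l}_\chi$ right inverse to the projection) if and only if $\chi=0$. *)

(* Defs.v *)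
From HB Require Import structures.
From mathcomp Require Import all_boot all_order all_algebra.
Set Implicit Arguments. Unset Strict Implicit. Unset Printing Implicit Defensive.
Import Order.TTheory GRing.Theory Num.Theory.
Local Open Scope ring_scope.

Section LieDefs.
Variables (K : fieldType) (L : lmodType K).

Definition lie_algebra (br : L -> L -> L) : Prop :=
  [/\ (forall (k : K) a b c, br (k *: a + b) c = k *: br a c + br b c),
      (forall (k : K) a b c, br a (k *: b + c) = k *: br a b + br a c),
      (forall a, br a a = 0) &
      (forall a b c, br a (br b c) + br b (br c a) + br c (br a b) = 0)].

(* Jacobson's sum  \sum_{i=1}^{p-1} s_i(a,b), where i s_i(a,b) is the
   coefficient of t^(i-1) in ad(t a + b)^(p-1)(a).  Expanding the power,
   this coefficient is the sum over words w in {a,b}^(p-1) with exactly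
   i-1 letters a of ad(w_1) ... ad(w_(p-1)) (a). *)
Definition jacobson_sum (p : nat) (br : L -> L -> L) (a b : L) : L :=
  \sum_(w : (p.-1).-tuple bool)
     ((count id w).+1%:R)^-1 *:
       foldr (fun (x : bool) acc => br (if x then a else b) acc) a w.

Definition restricted_lie (p : nat) (br : L -> L -> L) (pm : L -> L) : Prop :=
  [/\ lie_algebra br,
      (forall (k : K) a, pm (k *: a) = k ^+ p *: pm a),
      (forall a x, br (pm a) x = iter p (br a) x) &
      (forall a b, pm (a + b) = pm a + pm b + jacobson_sum p br a b)].

Definition perfect_lie (br : L -> L -> L) : Prop :=
  forall x : L, exists (n : nat) (k : n.-tuple K) (a b : n.-tuple L),
    x = \sum_(i < n) tnth k i *: br (tnth a i) (tnth b i).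

End LieDefs.

Section CentralExt.
Variables (K : fieldType) (L : lmodType K).

(* l_chi = l (+) K c, elements (a, alpha) standing for a + alpha c. *)
Definition ext_bracket (br : L -> L -> L) (x y : L * K^o) : L * K^o :=
  (br x.1 y.1, 0).

Definition ext_pmap (p : nat) (pm : L -> L) (chi : L -> K) (x : L * K^o)
  : L * K^o :=
  (pm x.1, chi x.1 ^+ p + x.2 ^+ p).

Definition ext_proj (x : L * K^o) : L := x.1.

Definition restricted_hom (M N : lmodType K)
  (brM : M -> M -> M) (pmM : M -> M) (brN : N -> N -> N) (pmN : N -> N)
  (f : M -> N) : Prop :=
  [/\ (forall (k : K) a b, f (k *: a + b) = k *: f a + f b),
      (forall a b, f (brM a b) = brN (f a) (f b)) &
      (forall a, f (pmM a) = pmN (f a))].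

Definition ext_splits (p : nat) (br : L -> L -> L) (pm : L -> L) (chi : L -> K)
  : Prop :=
  exists s : L -> L * K^o,
    restricted_hom br pm (ext_bracket br) (ext_pmap p pm chi) s /\
    (forall a, ext_proj (s a) = a).

End CentralExt.

(* Main.v *)
Require Import Defs.
From HB Require Import structures.
From mathcomp Require Import all_boot all_order all_algebra.
From Stdlib Require Import FunctionalExtensionality.
Import GRing.Theory.
Local Open Scope ring_scope.

Theorem corollary1p2p9 (K : closedFieldType) (p : nat) (hp : p \in [pchar K])
  (L : vectType K) (br : L -> L -> L) (pm : L -> L)
  (HL : restricted_lie p br pm) (Hperf : perfect_lie br)
  (chi : L -> K) (Hchi : forall (k : K) (a b : L), chi (k *: a + b) = k * chi a + chi b) :
  ext_splits p br pm chi <-> chi = (fun _ => 0).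
Proof.
have pgt0 : (0 < p)%N by apply: prime_gt0; case/andP: hp.
split.
- case=> s [[Hlin Hbr Hpm] Hproj].
  pose f := fun a => (s a).2.
  have sE : forall a, s a = (a, f a).
    by move=> a; rewrite /f; move: (Hproj a); rewrite /ext_proj; case: (s a) => x y /= ->.
  have flin : forall (k : K) a b, f (k *: a + b) = k * f a + f b.
    by move=> k a b; rewrite /f Hlin.
  have fadd : forall a b, f (a + b) = f a + f b.
    by move=> a b; have := flin 1 a b; rewrite scale1r mul1r.
  have f0 : f 0 = 0.
    by apply: (addIr (f 0)); rewrite add0r -fadd addr0.
  have fZ : forall (k : K) a, f (k *: a) = k * f a.
    by move=> k a; rewrite -[k *: a]addr0 flin f0 addr0.
  have fbr : forall a b, f (br a b) = 0.
    by move=> a b; rewrite /f Hbr.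
  have fz : forall x, f x = 0.
    move=> x; have [n [k [a [b ->]]]] := Hperf x.
    rewrite (big_morph f fadd f0); apply: big1 => i _.
    by rewrite fZ fbr mulr0.
  apply: functional_extensionality => a.
  have := Hpm a; rewrite !sE /ext_pmap /= !fz expr0n /=.
  rewrite eqn0Ngt pgt0 addr0 => -[] /esym /eqP.
  by rewrite expf_eq0 => /andP[_ /eqP].
- move=> ->; exists (fun a => (a, 0 : K^o)); split => //.
  split => /=.
  + by move=> k a b /=; apply/eqP; rewrite xpair_eqE /= eqxx /= scaler0 addr0.
  + by move=> a b.
  + by move=> a; rewrite /ext_pmap /= expr0n eqn0Ngt pgt0 addr0.
Qed.
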